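(* Consider the problem and algorithm AC2CD described in the context. At every inner iteration $(k,i)$, with $p=p^k_i$ and $j=j(k)$: (a) if $\Delta^{k,i} \le \frac{2(1-\gamma)}{L_{p,j}}$, then $\alpha^{k,i} = \Delta^{k,i}$; (b) if $\Delta^{k,i} > \frac{2(1-\gamma)}{L_{p,j}}$, then $\alpha^{k,i} \in \bigl(\frac{2\delta(1-\gamma)}{L_{p,j}}, \Delta^{k,i}\bigr]$. Consequently $\alpha^{k,i} \ge \min\bigl\{\Delta^{k,i}, \frac{2\delta(1-\gamma)}{L_{p,j}}\bigr\}$.
   Context: Problem: minimize $f(x)$ subject to $e^T x = b$ and $l_i \le x_i \le u_i$ ($i=1,\dots,n$), where $n\ge 2$, $e\in\mathbb{R}^n$ is the all-ones vector, $b\in\mathbb{R}$, $l_i\in\mathbb{R}\cup\{-\infty\}$, $u_i\in\mathbb{R}\cup\{+\infty\}$, $l_i<u_i$, and $f:\mathbb{R}^n\to\mathbb{R}$ is continuously differentiable with $\nabla f$ Lipschitz continuous on $\mathbb{R}^n$ with constant $L$. $\mathcal F$ is the feasible set and $e_i$ the $i$th unit vector. For $i\ne j$, $L_{i,j}>0$ are fixed constants such that for every $x\in\mathbb{R}^n$ and $s,t\in\mathbb{R}$, $|\nabla f(x+s(e_i-e_j))^T(e_i-e_j)-\nabla f(x+t(e_i-e_j))^T(e_i-e_j)|\le L_{i,j}|s-t|$; $L_{i,i}=0$ (and $c/0$ is read as $+\infty$ for $c>0$). For $x\in\mathcal F$, $D_h(x)=\min\{x_h-l_h,u_h-x_h\}$.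 Algorithm AC2CD with parameters $\tau\in(0,1]$, $\gamma,\delta\in(0,1)$, $0<A_l\le A_u<\infty$ and starting point $x^0\in\mathcal F$: for $k=0,1,2,\dots$ (outer iterations): let $D^k=\max_h D_h(x^k)$; choose an index $j(k)$ with $D_{j(k)}(x^k)\ge\tau D^k$; choose a permutation $(p^k_1,\dots,p^k_n)$ of $\{1,\dots,n\}$; set $z^{k,1}=x^k$; for $i=1,\dots,n$ (inner iteration $(k,i)$): set $g^{k,i}=\nabla_{j(k)}f(z^{k,i})-\nabla_{p^k_i}f(z^{k,i})$ and $d^{k,i}=g^{k,i}(e_{p^k_i}-e_{j(k)})$; let $\bar\alpha^{k,i}=\min\{u_{p^k_i}-z^{k,i}_{p^k_i},\,z^{k,i}_{j(k)}-l_{j(k)}\}/g^{k,i}$ if $g^{k,i}>0$, $\bar\alpha^{k,i}=\min\{z^{k,i}_{p^k_i}-l_{p^k_i},\,u_{j(k)}-z^{k,i}_{j(k)}\}/|g^{k,i}|$ if $g^{k,i}<0$, and $\bar\alpha^{k,i}=0$ if $g^{k,i}=0$; choose $A^{k,i}\in[A_l,A_u]$ and set $\Delta^{k,i}=\min\{\bar\alpha^{k,i},A^{k,i}\}$; Armijo line search: start with $\alpha=\Delta^{k,i}$ and, while $f(z^{k,i}+\alpha d^{k,i})>f(z^{k,i})+\gamma\alpha\nabla f(z^{k,i})^Td^{k,i}$, replace $\alpha$ by $\delta\alpha$; let $\alpha^{k,i}$ be the final $\alpha$ and $z^{k,i+1}=z^{k,i}+\alpha^{k,i}d^{k,i}$.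 Finally $x^{k+1}=z^{k,n+1}$. Standing assumptions: the level set $\mathcal L_0=\{x\in\mathcal F: f(x)\le f(x^0)\}$ is nonempty and compact, and every $x\in\mathcal L_0$ has at least one index $i$ with $l_i<x_i<u_i$. *)

(* Defs.v *)
From Stdlib Require Import Reals.
From Coquelicot Require Import Coquelicot.
Open Scope R_scope.

(* Vectors of R^n are represented as functions nat -> R; only the
   coordinates 0..n-1 are meaningful (indices are 0-based). *)
Definition vec := nat -> R.

Fixpoint vsum (m : nat) (F : nat -> R) : R :=
  match m with O => 0 | S k => vsum k F + F k end.

Definition dot (n : nat) (x y : vec) : R := vsum n (fun i => x i * y i).
Definition vnorm (n : nat) (x : vec) : R := sqrt (dot n x x).
Definition vadd (x y : vec) : vec := fun i => x i + y i.
Definition vsub (x y : vec) : vec := fun i => x i - y i.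
Definition vscale (a : R) (x : vec) : vec := fun i => a * x i.
Definition unitv (i : nat) : vec := fun h => if Nat.eqb h i then 1 else 0.

Definition on_Rn (n : nat) (f : vec -> R) : Prop :=
  forall x y : vec, (forall i, (i < n)%nat -> x i = y i) -> f x = f y.

Definition is_gradient (n : nat) (f : vec -> R) (grad : vec -> vec) : Prop :=
  forall x : vec, forall eps : R, 0 < eps -> exists del : R, 0 < del /\
    forall h : vec, vnorm n h < del ->
      Rabs (f (vadd x h) - f x - dot n (grad x) h) <= eps * vnorm n h.

Definition lipschitz_grad (n : nat) (grad : vec -> vec) (L : R) : Prop :=
  forall x y : vec, vnorm n (vsub (grad x) (grad y)) <= L * vnorm n (vsub x y).

Definition feasible (n : nat) (b : R) (l u : nat -> Rbar) (x : vec) : Prop :=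
  vsum n x = b /\
  forall i, (i < n)%nat -> Rbar_le (l i) (Finite (x i)) /\ Rbar_le (Finite (x i)) (u i).

Definition compact_Rn (n : nat) (K : vec -> Prop) : Prop :=
  forall s : nat -> vec, (forall m, K (s m)) ->
    exists phi : nat -> nat, (forall m, (phi m < phi (S m))%nat) /\
    exists y : vec, K y /\ forall i, (i < n)%nat -> Un_cv (fun m => s (phi m) i) (y i).

Definition Dh (l u : nat -> Rbar) (x : vec) (h : nat) : Rbar :=
  Rbar_min (Rbar_minus (Finite (x h)) (l h)) (Rbar_minus (u h) (Finite (x h))).

Definition rbar_max (a b : Rbar) : Rbar := if Rbar_le_dec a b then b else a.

Fixpoint rbmax (m : nat) (F : nat -> Rbar) : Rbar :=
  match m with O => m_infty | S k => rbar_max (rbmax k F) (F k) end.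

(* c / d with the convention c / 0 = +oo *)
Definition rdiv_inf (c d : R) : Rbar :=
  if Req_EM_T d 0 then p_infty else Finite (c / d).

(* the maximal stepsize bar alpha along d = g (e_p - e_j) *)
Definition alpha_bar (l u : nat -> Rbar) (z : vec) (p j : nat) (g : R) : Rbar :=
  if Rlt_dec 0 g then
    Rbar_mult (Rbar_min (Rbar_minus (u p) (Finite (z p)))
                        (Rbar_minus (Finite (z j)) (l j))) (Finite (/ g))
  else if Rlt_dec g 0 then
    Rbar_mult (Rbar_min (Rbar_minus (Finite (z p)) (l p))
                        (Rbar_minus (u j) (Finite (z j)))) (Finite (/ Rabs g))
  else Finite 0.

(* Armijo condition fails (the while-loop test is true) at stepsize a *)
Definition armijo_test (f : vec -> R) (n : nat) (grad : vec -> vec)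
    (gamma : R) (z d : vec) (a : R) : Prop :=
  f (vadd z (vscale a d)) > f z + gamma * a * dot n (grad z) d.

Definition armijo_output (f : vec -> R) (n : nat) (grad : vec -> vec)
    (gamma delta : R) (z d : vec) (Delta alpha : R) : Prop :=
  exists m : nat, alpha = delta ^ m * Delta /\
    ~ armijo_test f n grad gamma z d (delta ^ m * Delta) /\
    forall m', (m' < m)%nat -> armijo_test f n grad gamma z d (delta ^ m' * Delta).

(* Main.v *)
Require Import Defs.
From Stdlib Require Import Reals Lra Lia Psatz FunctionalExtensionality.
From Coquelicot Require Import Coquelicot.
Open Scope R_scope.

Lemma vsum_ext m F G : (forall i, (i < m)%nat -> F i = G i) -> vsum m F = vsum m G.
Proof. induction m; simpl; intros H; auto. rewrite IHm by (intros; apply H; lia). rewrite H by lia; auto. Qed.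

Lemma vsum_scal m a F : vsum m (fun i => a * F i) = a * vsum m F.
Proof. induction m; simpl. ring. rewrite IHm; ring. Qed.

Lemma vsum_sub m F G : vsum m (fun i => F i - G i) = vsum m F - vsum m G.
Proof. induction m; simpl. ring. rewrite IHm; ring. Qed.

Lemma vsum_unit0 m p w : (m <= p)%nat -> vsum m (fun i => w i * unitv p i) = 0.
Proof. induction m; simpl; intros H; auto. rewrite IHm by lia. unfold unitv.
  destruct (Nat.eqb_spec m p); [lia|]. ring. Qed.

Lemma vsum_unit m p w : (p < m)%nat -> vsum m (fun i => w i * unitv p i) = w p.
Proof. induction m; simpl; intros H; [lia|]. unfold unitv at 2.
  destruct (Nat.eqb_spec m p).
  - subst. rewrite vsum_unit0 by lia. ring.
  - rewrite IHm by lia. ring. Qed.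

Definition dv (p j : nat) : vec := vsub (unitv p) (unitv j).

Lemma dot_dv n w p j : (p < n)%nat -> (j < n)%nat -> dot n w (dv p j) = w p - w j.
Proof. intros. unfold dot, dv, vsub.
  rewrite (vsum_ext _ _ (fun i => w i * unitv p i - w i * unitv j i)) by (intros; ring).
  rewrite vsum_sub, !vsum_unit; auto. Qed.

Lemma dot_scal_r n w a y : dot n w (vscale a y) = a * dot n w y.
Proof. unfold dot, vscale. rewrite <- vsum_scal. apply vsum_ext; intros; ring. Qed.

Lemma vadd0 y w : vadd y (vscale 0 w) = y.
Proof. apply functional_extensionality; intro i; unfold vadd, vscale; ring. Qed.

Lemma sqrt2_facts : 0 < sqrt 2 /\ sqrt 2 * sqrt 2 = 2 /\ sqrt 2 < 2.
Proof. assert (0 < sqrt 2) by (apply sqrt_lt_R0; lra).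
  assert (sqrt 2 * sqrt 2 = 2) by (apply sqrt_sqrt; lra). nra. Qed.

Lemma vnorm_sv n p j h : (p < n)%nat -> (j < n)%nat -> p <> j ->
  vnorm n (vscale h (dv p j)) = sqrt 2 * Rabs h.
Proof. intros. unfold vnorm.
  assert (E : dot n (vscale h (dv p j)) (vscale h (dv p j)) = (h*h) * 2).
  { rewrite dot_scal_r. unfold dot. unfold vscale.
    rewrite (vsum_ext _ _ (fun i => h * (dv p j i * dv p j i))) by (intros; ring).
    rewrite vsum_scal. fold (dot n (dv p j) (dv p j)). rewrite dot_dv by auto.
    unfold dv, vsub, unitv. rewrite !Nat.eqb_refl.
    destruct (Nat.eqb_spec p j); [lia|]. destruct (Nat.eqb_spec j p); [lia|]. ring. }
  rewrite E, sqrt_mult by (try nra; lra). fold (Rsqr h). rewrite sqrt_Rsqr_abs. ring. Qed.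

Lemma deriv_psi n f grad p j y s : (p < n)%nat -> (j < n)%nat -> p <> j ->
  is_gradient n f grad ->
  is_derive (fun s => f (vadd y (vscale s (dv p j)))) s
            (dot n (grad (vadd y (vscale s (dv p j)))) (dv p j)).
Proof. intros Hp Hj Hpj Hg. apply is_derive_Reals. intros eps Heps.
  destruct sqrt2_facts as (S1 & S2 & S3).
  destruct (Hg (vadd y (vscale s (dv p j))) (eps/2)) as (del & Hdel & H); [lra|].
  assert (Hd2 : 0 < del/2) by lra.
  exists (mkposreal _ Hd2). simpl. intros h Hh0 Hh.
  specialize (H (vscale h (dv p j))). rewrite vnorm_sv in H by auto.
  assert (Hh' : 0 < Rabs h) by (apply Rabs_pos_lt; auto).
  specialize (H ltac:(nra)).
  replace (vadd (vadd y (vscale s (dv p j))) (vscale h (dv p j)))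
    with (vadd y (vscale (s + h) (dv p j))) in H
    by (apply functional_extensionality; intro i; unfold vadd, vscale; ring).
  rewrite dot_scal_r in H.
  set (A := f (vadd y (vscale (s + h) (dv p j)))) in *.
  set (B := f (vadd y (vscale s (dv p j)))) in *.
  set (D := dot n (grad (vadd y (vscale s (dv p j)))) (dv p j)) in *.
  replace ((A - B) / h - D) with ((A - B - h * D) / h) by (field; auto).
  unfold Rdiv. rewrite Rabs_mult, Rabs_inv.
  apply (Rmult_lt_reg_r (Rabs h)); auto. rewrite Rmult_assoc, Rinv_l by lra. assert (0 < eps * Rabs h * (2 - sqrt 2)) by (apply Rmult_lt_0_compat; [apply Rmult_lt_0_compat|]; lra). nra. Qed.

Lemma descent n f grad p j M : (p < n)%nat -> (j < n)%nat -> p <> j ->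
  is_gradient n f grad ->
  (forall (y : vec) (s t : R),
     Rabs (dot n (grad (vadd y (vscale s (dv p j)))) (dv p j)
         - dot n (grad (vadd y (vscale t (dv p j)))) (dv p j)) <= M * Rabs (s - t)) ->
  forall y t, f (vadd y (vscale t (dv p j))) <= f y + t * dot n (grad y) (dv p j) + M / 2 * t ^ 2.
Proof. intros Hp Hj Hpj Hg HL y t.
  set (psi := fun s => f (vadd y (vscale s (dv p j)))).
  set (dpsi := fun s => dot n (grad (vadd y (vscale s (dv p j)))) (dv p j)).
  set (a := dpsi 0).
  set (hf := fun s => psi s - (s * a + M / 2 * s ^ 2)).
  assert (Hh : forall s, is_derive hf s (dpsi s - (a + M * s))).
  { intro s. unfold hf.
    assert (H1 := deriv_psi n f grad p j y s Hp Hj Hpj Hg).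
    assert (H2 : is_derive (fun s => s * a + M / 2 * s ^ 2) s (a + M * s)).
    { auto_derive; [exact I| field]. }
    apply (is_derive_minus _ _ _ _ _ H1 H2). }
  destruct (MVT_gen hf 0 t (fun s => dpsi s - (a + M * s))) as (c & Hc & E).
  { intros; apply Hh. }
  { intros x _. apply continuity_pt_filterlim. apply (ex_derive_continuous (K:=R_AbsRing) (V:=R_NormedModule) hf x).
    eexists; apply Hh. }
  assert (HLc := HL y c 0). fold (dpsi c) in HLc. fold (dpsi 0) in HLc. fold a in HLc.
  rewrite Rminus_0_r in HLc.
  assert (Hneg : (dpsi c - (a + M * c)) * (t - 0) <= 0).
  { revert Hc. unfold Rmin, Rmax. destruct (Rle_dec 0 t); intros Hc.
    - rewrite (Rabs_right c) in HLc by lra.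
      assert (dpsi c - a <= M * c) by (eapply Rle_trans; [apply Rle_abs | exact HLc]).
      assert (0 <= -(dpsi c - (a + M * c)) * (t - 0)) by (apply Rmult_le_pos; lra). lra.
    - rewrite (Rabs_left1 c) in HLc by lra.
      assert (- (dpsi c - a) <= M * - c).
      { eapply Rle_trans; [|exact HLc]. rewrite <- Rabs_Ropp. apply Rle_abs. }
      assert (0 <= (dpsi c - (a + M * c)) * -(t - 0)) by (apply Rmult_le_pos; lra). lra. }
  unfold hf, psi in E. rewrite vadd0 in E. unfold a, dpsi in *. rewrite vadd0 in *. lra.
Qed.

Lemma armijo_ok n f grad p j M gamma z a : (p < n)%nat -> (j < n)%nat -> p <> j ->
  is_gradient n f grad ->
  (forall (y : vec) (s t : R),
     Rabs (dot n (grad (vadd y (vscale s (dv p j)))) (dv p j)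
         - dot n (grad (vadd y (vscale t (dv p j)))) (dv p j)) <= M * Rabs (s - t)) ->
  0 < M -> 0 < gamma < 1 -> 0 <= a -> a <= 2 * (1 - gamma) / M ->
  ~ armijo_test f n grad gamma z (vscale (grad z j - grad z p) (dv p j)) a.
Proof. intros Hp Hj Hpj Hg HL HM Hga Ha0 Ha. unfold armijo_test. intro H.
  set (g := grad z j - grad z p) in *.
  replace (vadd z (vscale a (vscale g (dv p j)))) with (vadd z (vscale (a * g) (dv p j))) in H
    by (apply functional_extensionality; intro i; unfold vadd, vscale; ring).
  assert (D := descent n f grad p j M Hp Hj Hpj Hg HL z (a * g)).
  rewrite dot_scal_r, dot_dv in H by auto. rewrite dot_dv in D by auto.
  assert (E : grad z p - grad z j = - g) by (unfold g; ring). rewrite E in H, D.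
  assert (HMa : M * a <= 2 * (1 - gamma)).
  { apply (Rmult_le_compat_l M) in Ha; [|lra]. replace (M * (2 * (1 - gamma) / M)) with (2 * (1 - gamma)) in Ha by (field; lra). lra. }
  assert (0 <= a * (g * g) * ((1 - gamma) - M * a / 2)).
  { apply Rmult_le_pos; [apply Rmult_le_pos; [lra| nra]| lra]. }
  nra.
Qed.

Lemma armijo_first f n grad gamma delta z d D a :
  ~ armijo_test f n grad gamma z d D -> armijo_output f n grad gamma delta z d D a -> a = D.
Proof. intros Hn (m & Ha & Hm & Hlt). destruct m.
  - simpl in Ha. lra.
  - exfalso. apply Hn. assert (H := Hlt 0%nat ltac:(lia)). simpl in H. rewrite Rmult_1_l in H. exact H.
Qed.

Lemma pow_le1 d m : 0 <= d <= 1 -> 0 <= d ^ m <= 1.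
Proof. intros H. induction m; simpl. lra. split. apply Rmult_le_pos; lra. nra. Qed.

Definition box (n : nat) (l u : nat -> Rbar) (y : vec) : Prop :=
  forall h, (h < n)%nat -> Rbar_le (l h) (Finite (y h)) /\ Rbar_le (Finite (y h)) (u h).

Lemma rb_minus_nonneg1 x U : Rbar_le (Finite x) U -> Rbar_le (Finite 0) (Rbar_minus U (Finite x)).
Proof. destruct U; simpl; auto. lra. Qed.
Lemma rb_minus_nonneg2 x Lo : Rbar_le Lo (Finite x) -> Rbar_le (Finite 0) (Rbar_minus (Finite x) Lo).
Proof. destruct Lo; simpl; auto. lra. Qed.
Lemma rb_min_nonneg X Y : Rbar_le (Finite 0) X -> Rbar_le (Finite 0) Y -> Rbar_le (Finite 0) (Rbar_min X Y).
Proof. intros. apply Rbar_min_case; auto. Qed.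
Lemma rb_mult_nonneg X c : Rbar_le (Finite 0) X -> 0 < c -> Rbar_le (Finite 0) (Rbar_mult X (Finite c)).
Proof. intros H Hc. destruct X; simpl in *.
  - apply Rmult_le_pos; lra.
  - unfold Rbar_mult, Rbar_mult'. destruct (Rle_dec 0 c); [destruct (Rle_lt_or_eq_dec 0 c r)|]; simpl; auto; lra.
  - contradiction.
Qed.
Lemma rb_mult_inv a X c : 0 < c -> Rbar_le (Finite a) (Rbar_mult X (Finite (/ c))) -> Rbar_le (Finite (a * c)) X.
Proof. intros Hc H. assert (Hi : 0 < / c) by (apply Rinv_0_lt_compat; auto).
  destruct X; simpl in *.
  - apply (Rmult_le_compat_r c) in H; [|lra]. rewrite Rmult_assoc, Rinv_l in H by lra. lra.
  - auto.
  - revert H. unfold Rbar_mult, Rbar_mult'. destruct (Rle_dec 0 (/ c)); [destruct (Rle_lt_or_eq_dec 0 (/c) r)|]; simpl; auto; lra.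
Qed.
Lemma rb_le_min a X Y : Rbar_le a (Rbar_min X Y) -> Rbar_le a X /\ Rbar_le a Y.
Proof. intros H. split; eapply Rbar_le_trans; eauto; [apply Rbar_min_l|apply Rbar_min_r]. Qed.
Lemma rb_up a x U : Rbar_le (Finite a) (Rbar_minus U (Finite x)) -> Rbar_le (Finite (x + a)) U.
Proof. destruct U; simpl; auto. lra. Qed.
Lemma rb_lo a x Lo : Rbar_le (Finite a) (Rbar_minus (Finite x) Lo) -> Rbar_le Lo (Finite (x - a)).
Proof. destruct Lo; simpl; auto. lra. Qed.
Lemma rb_le_fin_r Lo x y : Rbar_le Lo (Finite x) -> x <= y -> Rbar_le Lo (Finite y).
Proof. intros H1 H2. apply (Rbar_le_trans _ (Finite x)); [exact H1|simpl; auto]. Qed.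
Lemma rb_le_fin_l U x y : Rbar_le (Finite x) U -> y <= x -> Rbar_le (Finite y) U.
Proof. intros H1 H2. apply (Rbar_le_trans _ (Finite x)); [simpl; auto|exact H1]. Qed.

Lemma min_fin X A D : Rbar_le (Finite 0) X -> 0 < A -> Rbar_min X (Finite A) = Finite D ->
  0 <= D /\ Rbar_le (Finite D) X.
Proof. intros HX HA E. split.
  - assert (H : Rbar_le (Finite 0) (Rbar_min X (Finite A))) by (apply Rbar_min_case; simpl; auto; lra).
    rewrite E in H. exact H.
  - rewrite <- E. apply Rbar_min_l.
Qed.

Lemma alpha_bar_nonneg n l u z p j g : box n l u z -> (p < n)%nat -> (j < n)%nat ->
  Rbar_le (Finite 0) (alpha_bar l u z p j g).
Proof. intros Hb Hp Hj. destruct (Hb p Hp) as [Hlp Hup]. destruct (Hb j Hj) as [Hlj Huj].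
  unfold alpha_bar. destruct (Rlt_dec 0 g).
  - apply rb_mult_nonneg; [|apply Rinv_0_lt_compat; auto].
    apply rb_min_nonneg; [apply rb_minus_nonneg1 | apply rb_minus_nonneg2]; auto.
  - destruct (Rlt_dec g 0).
    + apply rb_mult_nonneg; [|apply Rinv_0_lt_compat; apply Rabs_pos_lt; lra].
      apply rb_min_nonneg; [apply rb_minus_nonneg2 | apply rb_minus_nonneg1]; auto.
    + simpl; lra.
Qed.

Lemma box_step n l u z p j g A D a : box n l u z -> (p < n)%nat -> (j < n)%nat -> 0 < A ->
  Rbar_min (alpha_bar l u z p j g) (Finite A) = Finite D -> 0 <= a <= D ->
  box n l u (vadd z (vscale a (vscale g (dv p j)))).
Proof. intros Hb Hp Hj HA E Ha.
  destruct (min_fin _ _ _ (alpha_bar_nonneg n l u z p j g Hb Hp Hj) HA E) as [HD0 HDle].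
  assert (Hal : Rbar_le (Finite a) (alpha_bar l u z p j g)).
  { eapply Rbar_le_trans; [|exact HDle]. simpl; lra. }
  destruct (Hb p Hp) as [Hlp Hup]. destruct (Hb j Hj) as [Hlj Huj].
  intros h Hh. destruct (Hb h Hh) as [Hl Hu]. unfold vadd, vscale, dv, vsub, unitv.
  destruct (Nat.eqb_spec h p), (Nat.eqb_spec h j).
  - replace (z h + a * (g * (1 - 1))) with (z h) by ring. auto.
  - subst h. replace (z p + a * (g * (1 - 0))) with (z p + a * g) by ring.
    unfold alpha_bar in Hal. destruct (Rlt_dec 0 g).
    + apply rb_mult_inv in Hal; auto. apply rb_le_min in Hal as [H1 H2].
      split. apply (rb_le_fin_r _ (z p)); auto; nra. apply rb_up; auto.
    + destruct (Rlt_dec g 0).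
      * apply rb_mult_inv in Hal; [|apply Rabs_pos_lt; lra]. rewrite Rabs_left in Hal by lra.
        apply rb_le_min in Hal as [H1 H2]. split.
        -- replace (z p + a * g) with (z p - a * - g) by ring. apply rb_lo; auto.
        -- apply (rb_le_fin_l _ (z p)); auto; nra.
      * replace (z p + a * g) with (z p) by (assert (g = 0) by lra; subst; ring). auto.
  - subst h. replace (z j + a * (g * (0 - 1))) with (z j - a * g) by ring.
    unfold alpha_bar in Hal. destruct (Rlt_dec 0 g).
    + apply rb_mult_inv in Hal; auto. apply rb_le_min in Hal as [H1 H2].
      split. apply rb_lo; auto. apply (rb_le_fin_l _ (z j)); auto; nra.
    + destruct (Rlt_dec g 0).
      * apply rb_mult_inv in Hal; [|apply Rabs_pos_lt; lra]. rewrite Rabs_left in Hal by lra.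
        apply rb_le_min in Hal as [H1 H2]. split.
        -- apply (rb_le_fin_r _ (z j)); auto; nra.
        -- replace (z j - a * g) with (z j + a * - g) by ring. apply rb_up; auto.
      * replace (z j - a * g) with (z j) by (assert (g = 0) by lra; subst; ring). auto.
  - replace (z h + a * (g * (0 - 0))) with (z h) by ring. auto.
Qed.
Theorem lemma1
  (n : nat) (b : R) (l u : nat -> Rbar) (f : vec -> R) (grad : vec -> vec)
  (L : R) (Lij : nat -> nat -> R)
  (tau gamma delta Al Au : R)
  (x : nat -> vec) (z : nat -> nat -> vec) (jk : nat -> nat)
  (perm : nat -> nat -> nat) (A Delta alpha : nat -> nat -> R) :
  (2 <= n)%nat ->
  (* problem data *)
  (forall i, (i < n)%nat -> l i <> p_infty /\ u i <> m_infty /\ Rbar_lt (l i) (u i)) ->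
  on_Rn n f ->
  is_gradient n f grad ->
  0 <= L -> lipschitz_grad n grad L ->
  (forall i j, (i < n)%nat -> (j < n)%nat -> i <> j -> 0 < Lij i j) ->
  (forall i, (i < n)%nat -> Lij i i = 0) ->
  (forall i j, (i < n)%nat -> (j < n)%nat -> forall (y : vec) (s t : R),
     Rabs (dot n (grad (vadd y (vscale s (vsub (unitv i) (unitv j))))) (vsub (unitv i) (unitv j))
         - dot n (grad (vadd y (vscale t (vsub (unitv i) (unitv j))))) (vsub (unitv i) (unitv j)))
     <= Lij i j * Rabs (s - t)) ->
  (* standing assumptions on the level set L0 *)
  feasible n b l u (x 0%nat) ->
  compact_Rn n (fun y => feasible n b l u y /\ f y <= f (x 0%nat)) ->
  (forall y, feasible n b l u y -> f y <= f (x 0%nat) ->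
     exists i, (i < n)%nat /\ Rbar_lt (l i) (Finite (y i)) /\ Rbar_lt (Finite (y i)) (u i)) ->
  (* algorithm parameters *)
  0 < tau <= 1 -> 0 < gamma < 1 -> 0 < delta < 1 -> 0 < Al <= Au ->
  (* the iterates of AC2CD (inner index i = 0..n-1) *)
  (forall k, (jk k < n)%nat /\
     Rbar_le (Rbar_mult (Finite tau) (rbmax n (Dh l u (x k)))) (Dh l u (x k) (jk k))) ->
  (forall k, (forall i, (i < n)%nat -> (perm k i < n)%nat) /\
     (forall i i', (i < n)%nat -> (i' < n)%nat -> perm k i = perm k i' -> i = i')) ->
  (forall k, z k 0%nat = x k) ->
  (forall k, x (S k) = z k n) ->
  (forall k i, (i < n)%nat ->
     let p := perm k i in let j := jk k in
     let g := grad (z k i) j - grad (z k i) p in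
     let d := vscale g (vsub (unitv p) (unitv j)) in
     Al <= A k i <= Au /\
     Rbar_min (alpha_bar l u (z k i) p j g) (Finite (A k i)) = Finite (Delta k i) /\
     armijo_output f n grad gamma delta (z k i) d (Delta k i) (alpha k i) /\
     z k (S i) = vadd (z k i) (vscale (alpha k i) d)) ->
  (* conclusion *)
  forall k i, (i < n)%nat ->
    let p := perm k i in let j := jk k in
    (Rbar_le (Finite (Delta k i)) (rdiv_inf (2 * (1 - gamma)) (Lij p j)) ->
       alpha k i = Delta k i) /\
    (Rbar_lt (rdiv_inf (2 * (1 - gamma)) (Lij p j)) (Finite (Delta k i)) ->
       Rbar_lt (rdiv_inf (2 * delta * (1 - gamma)) (Lij p j)) (Finite (alpha k i)) /\
       alpha k i <= Delta k i) /\
    Rbar_le (Rbar_min (Finite (Delta k i)) (rdiv_inf (2 * delta * (1 - gamma)) (Lij p j)))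
            (Finite (alpha k i)).
Proof.
  intros Hn Hlu Hon Hg HL0 HLip HLpos HLdiag HLij Hfeas Hcomp Hint Htau Hgam Hdel HAl
    Hjk Hperm Hz0 Hxs Hit.
  assert (Hstep : forall k i, (i < n)%nat -> box n l u (z k i) ->
            box n l u (z k (S i)) /\ 0 <= Delta k i).
  { intros k i Hi Hb. pose proof (Hit k i Hi) as HH. cbv zeta in HH.
    destruct HH as (HA & HD & Harm & Hz).
    destruct (Hperm k) as [Hp _]. specialize (Hp i Hi). destruct (Hjk k) as [Hj _].
    destruct (min_fin _ _ _ (alpha_bar_nonneg n l u (z k i) _ _ _ Hb Hp Hj)
                (ltac:(lra) : 0 < A k i) HD) as [HD0 _].
    split; auto. rewrite Hz. eapply box_step; eauto; [lra|].
    destruct Harm as (m & Ha & _ & _). rewrite Ha.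
    destruct (pow_le1 delta m ltac:(lra)). split; [apply Rmult_le_pos; lra| nra]. }
  assert (Hbx : forall k, box n l u (x k) /\ forall i, (i <= n)%nat -> box n l u (z k i)).
  { intro k. assert (Hxk : box n l u (x k)).
    { induction k.
      - destruct Hfeas as [_ Hb]. exact Hb.
      - rewrite Hxs. assert (H : forall i, (i <= n)%nat -> box n l u (z k i)).
        { induction i; intros Hi. rewrite Hz0; auto. apply Hstep; [lia|]. apply IHi; lia. }
        apply H; lia. }
    split; auto. induction i; intros Hi. rewrite Hz0; auto. apply Hstep; [lia|]. apply IHi; lia. }
  intros k i Hi. cbv zeta.
  assert (HD0 : 0 <= Delta k i).
  { apply (Hstep k i Hi). apply (proj2 (Hbx k)). lia. }
  pose proof (Hit k i Hi) as HH. cbv zeta in HH.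
  destruct HH as (HA & HD & Harm & Hz).
  destruct (Hperm k) as [Hp _]. specialize (Hp i Hi). destruct (Hjk k) as [Hj _].
  destruct (Nat.eq_dec (perm k i) (jk k)) as [e|ne].
  - rewrite e in *. rewrite (HLdiag _ Hj). unfold rdiv_inf.
    destruct (Req_EM_T 0 0); [|lra].
    assert (Hnt : ~ armijo_test f n grad gamma (z k i)
       (vscale (grad (z k i) (jk k) - grad (z k i) (jk k)) (vsub (unitv (jk k)) (unitv (jk k)))) (Delta k i)).
    { unfold armijo_test.
      replace (vadd (z k i) (vscale (Delta k i) (vscale (grad (z k i) (jk k) - grad (z k i) (jk k))
                 (vsub (unitv (jk k)) (unitv (jk k)))))) with (z k i)
        by (apply functional_extensionality; intro h; unfold vadd, vscale; ring).
      rewrite dot_scal_r. replace (grad (z k i) (jk k) - grad (z k i) (jk k)) with 0 by ring. lra. }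
    assert (Ea := armijo_first _ _ _ _ _ _ _ _ _ Hnt Harm).
    split; [auto|split].
    + simpl. intros [].
    + rewrite Ea. apply Rbar_min_l.
  - assert (HM : 0 < Lij (perm k i) (jk k)) by (apply HLpos; auto).
    set (M := Lij (perm k i) (jk k)) in *.
    unfold rdiv_inf. destruct (Req_EM_T M 0); [lra|].
    assert (Hkey : forall a, 0 <= a -> a <= 2 * (1 - gamma) / M ->
       ~ armijo_test f n grad gamma (z k i)
          (vscale (grad (z k i) (jk k) - grad (z k i) (perm k i)) (vsub (unitv (perm k i)) (unitv (jk k)))) a).
    { intros a Ha0 Ha. apply (armijo_ok n f grad (perm k i) (jk k) M gamma); auto; try lra. exact (HLij _ _ Hp Hj). }
    assert (Hc : 0 < 2 * (1 - gamma) / M) by (apply Rdiv_lt_0_compat; lra).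
    assert (Ecd : 2 * delta * (1 - gamma) / M = delta * (2 * (1 - gamma) / M)) by (field; lra).
    rewrite Ecd.
    assert (Hb : 2 * (1 - gamma) / M < Delta k i ->
              delta * (2 * (1 - gamma) / M) < alpha k i /\ alpha k i <= Delta k i).
    { intros Hlt. destruct Harm as (m & Ha & Hnt & Hprev).
      destruct (pow_le1 delta m ltac:(lra)) as [Hm0 Hm1].
      split; [|rewrite Ha; nra].
      destruct m.
      + simpl in Ha. nra.
      + assert (Ht := Hprev m ltac:(lia)).
        destruct (pow_le1 delta m ltac:(lra)) as [Hm0' Hm1'].
        destruct (Rle_dec (delta ^ m * Delta k i) (2 * (1 - gamma) / M)) as [Hle|Hgt].
        * exfalso. assert (0 <= delta ^ m * Delta k i) by (apply Rmult_le_pos; lra). apply (Hkey _ H Hle). exact Ht.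
        * rewrite Ha. simpl. rewrite Rmult_assoc. apply Rmult_lt_compat_l; lra. }
    assert (Ha : Delta k i <= 2 * (1 - gamma) / M -> alpha k i = Delta k i).
    { intros Hle. apply (armijo_first _ _ _ _ _ _ _ _ _ (Hkey _ HD0 Hle) Harm). }
    split; [simpl; auto|split; [simpl; auto|]].
    destruct (Rle_dec (Delta k i) (2 * (1 - gamma) / M)) as [Hle|Hgt].
    + rewrite (Ha Hle). apply Rbar_min_l.
    + destruct (Hb ltac:(lra)) as [H1 _].
      apply (Rbar_le_trans _ (Finite (delta * (2 * (1 - gamma) / M)))); [apply Rbar_min_r|simpl; lra].
Qed.
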